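(* Let $(C,\mathfrak p,\mathfrak d)$ be a regular $q$-cycle coalgebra. Then $\mathfrak p_{11}^1=\mathfrak d_{11}^1$.
   Context: $K$ is an algebraically closed field of characteristic $0$ and $n\ge2$. $C$ is the coalgebra dual to $K[y]/\langle y^n\rangle$: basis $x_0,\dots,x_{n-1}$, $\Delta(x_i)=\sum_{j+k=i}x_j\otimes x_k$, $\epsilon(x_i)=\delta_{i0}$; $C\otimes C$ has the tensor product coalgebra structure; Sweedler notation $\Delta(b)=b_{(1)}\otimes b_{(2)}$. For linear maps $\mathfrak p,\mathfrak d\colon C\otimes C\to C$ write $a\cdot b=\mathfrak p(a\otimes b)$, $a:b=\mathfrak d(a\otimes b)$, $\mathfrak p(x_i\otimes x_j)=\sum_{k=0}^{n-1}\mathfrak p_{ij}^kx_k$, $\mathfrak d(x_i\otimes x_j)=\sum_{k=0}^{n-1}\mathfrak d_{ij}^kx_k$. A triple $(C,\mathfrak p,\mathfrak d)$ with $\mathfrak p,\mathfrak d$ coalgebra morphisms is a regular $q$-magma coalgebra if there are coalgebra morphisms $a\otimes b\mapsto a^b$, $a\otimes b\mapsto a_b$ from $C\otimes C$ to $C$ with $a^{b_{(1)}}\cdot b_{(2)}=(a\cdot b_{(1)})^{b_{(2)}}=\epsilon(b)a$ and $(a:b_{(2)})_{b_{(1)}}=a_{b_{(2)}}:b_{(1)}=\epsilon(b)a$. It is a regular $q$-cycle coalgebra if moreover for all $a,b,c$: (1) $(a\cdot b_{(1)})\cdot(c:b_{(2)})=(a\cdot c_{(2)})\cdot(b\cdot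 c_{(1)})$; (2) $(a\cdot b_{(1)}):(c\cdot b_{(2)})=(a:c_{(2)})\cdot(b:c_{(1)})$; (3) $(a:b_{(1)}):(c:b_{(2)})=(a:c_{(2)}):(b\cdot c_{(1)})$. *)

(* Defs.v *)
From mathcomp Require Import all_boot all_algebra.
Set Implicit Arguments. Unset Strict Implicit. Unset Printing Implicit Defensive.
Import GRing.Theory.
Local Open Scope ring_scope.

(* The coalgebra C dual to K[y]/<y^n>: elements are coordinate vectors
   a = sum_i a i x_i, with i : 'I_n.  Elements of C (x) C are coordinate
   arrays t = sum_{i,j} t i j (x_i (x) x_j).  A linear map C (x) C -> C is
   given by its structure constants f : f (x_i (x) x_j) = sum_k f i j k x_k. *)

Section QCycle.
Variables (K : fieldType) (n : nat).

Definition vec := 'I_n -> K.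
Definition tens := 'I_n -> 'I_n -> K.
Definition sconst := 'I_n -> 'I_n -> 'I_n -> K.

Definition veq (u v : vec) : Prop := forall k, u k = v k.

Definition bas (j : 'I_n) : vec := fun i => (i == j)%:R.

Definition vscale (c : K) (a : vec) : vec := fun k => c * a k.

Definition eps (a : vec) : K := \sum_(i < n) ((i : nat) == 0%N)%:R * a i.

Definition comul (a : vec) : tens :=
  fun j k => \sum_(i < n) ((j + k)%N == i)%:R * a i.

Definition bil (f : sconst) (a b : vec) : vec :=
  fun k => \sum_(i < n) \sum_(j < n) a i * b j * f i j k.

Definition lin (f : sconst) (t : tens) : vec :=
  fun k => \sum_(i < n) \sum_(j < n) t i j * f i j k.

Definition eps2 (t : tens) : K :=
  \sum_(i < n) \sum_(j < n) ((i : nat) == 0%N)%:R * ((j : nat) == 0%N)%:R * t i j.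

(* (f (x) f)(Delta_{C(x)C}(t)), as an element of C (x) C, where
   Delta_{C(x)C}(x_i (x) x_j) = sum_{a+b=i, c+d=j} (x_a (x) x_c) (x) (x_b (x) x_d) *)
Definition ff_comul2 (f : sconst) (t : tens) : tens :=
  fun k l => \sum_(i < n) \sum_(j < n) t i j *
     \sum_(a < n) \sum_(b < n) \sum_(c < n) \sum_(d < n)
        ((a + b)%N == i)%:R * ((c + d)%N == j)%:R * (f a c k * f b d l).

Definition coalg_morph (f : sconst) : Prop :=
  (forall t : tens, forall k l, comul (lin f t) k l = ff_comul2 f t k l) /\
  (forall t : tens, eps (lin f t) = eps2 t).

(* Sweedler sum: sw b F = F(b_(1), b_(2)) for F bilinear *)
Definition sw (b : vec) (F : vec -> vec -> vec) : vec :=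
  fun m => \sum_(j < n) \sum_(k < n) comul b j k * F (bas j) (bas k) m.

Definition regular_qmagma_coalg (p d : sconst) : Prop :=
  coalg_morph p /\ coalg_morph d /\
  exists up dn : sconst, coalg_morph up /\ coalg_morph dn /\
   forall a b : vec,
     (* a^{b(1)} . b(2) = eps(b) a *)
     veq (sw b (fun b1 b2 => bil p (bil up a b1) b2)) (vscale (eps b) a) /\
     (* (a . b(1))^{b(2)} = eps(b) a *)
     veq (sw b (fun b1 b2 => bil up (bil p a b1) b2)) (vscale (eps b) a) /\
     (* (a : b(2))_{b(1)} = eps(b) a *)
     veq (sw b (fun b1 b2 => bil dn (bil d a b2) b1)) (vscale (eps b) a) /\
     (* a_{b(2)} : b(1) = eps(b) a *)
     veq (sw b (fun b1 b2 => bil d (bil dn a b2) b1)) (vscale (eps b) a).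

Definition regular_qcycle_coalg (p d : sconst) : Prop :=
  regular_qmagma_coalg p d /\
  forall a b c : vec,
    (* (1) (a.b(1)).(c:b(2)) = (a.c(2)).(b.c(1)) *)
    veq (sw b (fun b1 b2 => bil p (bil p a b1) (bil d c b2)))
        (sw c (fun c1 c2 => bil p (bil p a c2) (bil p b c1))) /\
    (* (2) (a.b(1)):(c.b(2)) = (a:c(2)).(b:c(1)) *)
    veq (sw b (fun b1 b2 => bil d (bil p a b1) (bil p c b2)))
        (sw c (fun c1 c2 => bil p (bil d a c2) (bil d b c1))) /\
    (* (3) (a:b(1)):(c:b(2)) = (a:c(2)):(b.c(1)) *)
    veq (sw b (fun b1 b2 => bil d (bil d a b1) (bil d c b2)))
        (sw c (fun c1 c2 => bil d (bil d a c2) (bil p b c1))).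

End QCycle.

(* Main.v *)
Require Import Defs.
From mathcomp Require Import all_boot all_algebra.
From mathcomp Require Import zify ring.
Set Implicit Arguments. Unset Strict Implicit. Unset Printing Implicit Defensive.
Import GRing.Theory.
Local Open Scope ring_scope.

Section Aux0.
Variables (K : fieldType).

Lemma sum_single {n} (G : 'I_n -> K) i0 :
  (forall i, i != i0 -> G i = 0) -> \sum_i G i = G i0.
Proof.
move=> H; rewrite (bigD1 i0) //= big1 ?addr0 // => i hi; exact: H.
Qed.

Lemma sum_two {n} (G : 'I_n -> K) i0 i1 : i0 != i1 ->
  (forall i, i != i0 -> i != i1 -> G i = 0) -> \sum_i G i = G i0 + G i1.
Proof.
move=> h01 H; rewrite (bigD1 i0) //= (bigD1 i1) /=; last by rewrite eq_sym.
rewrite big1 ?addr0 // => i /andP[hi0 hi1]; exact: H.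
Qed.

Lemma sumn_single (G : nat -> K) N c0 : (c0 < N)%N ->
  (forall c, (c < N)%N -> c != c0 -> G c = 0) -> \sum_(0 <= c < N) G c = G c0.
Proof.
move=> hc H; rewrite big_mkord (sum_single (i0 := Ordinal hc)) // => i hi.
apply: H => //; by rewrite -val_eqE in hi.
Qed.

Lemma sumn_zero (G : nat -> K) N :
  (forall c, (c < N)%N -> G c = 0) -> \sum_(0 <= c < N) G c = 0.
Proof. by move=> H; rewrite big_mkord big1 // => i _; apply: H. Qed.

End Aux0.
Section Aux.
Variables (K : fieldType) (n : nat).
Lemma sum2_delta (G : 'I_n -> 'I_n -> K) i0 j0 :
  \sum_x \sum_y ((x == i0)%:R * (y == j0)%:R * G x y) = G i0 j0.
Proof.
rewrite (sum_single (i0 := i0)) => [|x hx]; last first.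
  by apply: big1 => y _; rewrite (negbTE hx) !mul0r.
rewrite (sum_single (i0 := j0)) ?eqxx ?mul1r // => y hy.
by rewrite (negbTE hy) mulr0 mul0r.
Qed.

Lemma comul_bas (j0 j k : 'I_n) : comul (bas K j0) j k = ((j + k)%N == j0)%:R.
Proof.
rewrite /comul /bas (sum_single (i0 := j0)) ?eqxx ?mulr1 // => i hi.
by rewrite (negbTE hi) mulr0.
Qed.

Lemma bil_bas (f : sconst K n) i1 j1 i : bil f (bas K i1) (bas K j1) i = f i1 j1 i.
Proof.
by rewrite /bil /bas (sum2_delta (fun x y => f x y i)).
Qed.

Lemma bil_sp (f : sconst K n) (u v : vec K n) r s k :
  (forall i, i != r -> u i = 0) -> (forall j, j != s -> v j = 0) ->
  bil f u v k = u r * v s * f r s k.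
Proof.
move=> hu hv; rewrite /bil (sum_single (i0 := r)) => [|i hi].
  by rewrite (sum_single (i0 := s)) // => j hj; rewrite hv // mulr0 mul0r.
by apply: big1 => j _; rewrite hu // !mul0r.
Qed.

Lemma bil2 (f g h : sconst K n) i1 j1 i2 j2 r s k :
  (forall i, i != r -> g i1 j1 i = 0) -> (forall j, j != s -> h i2 j2 j = 0) ->
  bil f (bil g (bas K i1) (bas K j1)) (bil h (bas K i2) (bas K j2)) k
    = g i1 j1 r * h i2 j2 s * f r s k.
Proof.
move=> hg hh; rewrite (@bil_sp f _ _ r s k) ?bil_bas // => i hi;
by rewrite bil_bas; auto.
Qed.

Lemma bil1 (f g : sconst K n) i1 j1 j r k :
  (forall i, i != r -> g i1 j1 i = 0) ->
  bil f (bil g (bas K i1) (bas K j1)) (bas K j) k = g i1 j1 r * f r j k.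
Proof.
move=> hg; rewrite (@bil_sp f _ _ r j k) ?bil_bas //.
  by rewrite /bas eqxx mulr1.
by move=> i hi; rewrite bil_bas; auto.
by move=> i hi; rewrite /bas (negbTE hi).
Qed.

Lemma ord_neq (i j : 'I_n) : i != j -> (i : nat) != j.
Proof. by []. Qed.
Variables (o0 o1 : 'I_n) (h0 : nat_of_ord o0 = 0%N) (h1 : nat_of_ord o1 = 1%N).

Lemma sw0 (F : vec K n -> vec K n -> vec K n) k : sw (bas K o0) F k = F (bas K o0) (bas K o0) k.
Proof.
rewrite /sw (sum_single (i0 := o0)) => [|j hj].
  rewrite (sum_single (i0 := o0)) => [|l hl]; first by rewrite comul_bas h0 eqxx mul1r.
  rewrite comul_bas h0 (_ : (_ == _) = false) ?mul0r //.
  by apply/negbTE; move/ord_neq: hl; rewrite h0; lia.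
apply: big1 => l _; rewrite comul_bas (_ : (_ == _) = false) ?mul0r //.
by apply/negbTE; move/ord_neq:  hj; lia.
Qed.

Lemma sw1 (F : vec K n -> vec K n -> vec K n) k : sw (bas K o1) F k = F (bas K o0) (bas K o1) k + F (bas K o1) (bas K o0) k.
Proof.
have h01 : o0 != o1 by apply/eqP => e; move: h0; rewrite e h1.
rewrite /sw (sum_two h01) => [|j hj0 hj1].
  rewrite (sum_single (i0 := o1)) => [|l hl].
    rewrite (sum_single (i0 := o0)) => [|l hl]; first by rewrite !comul_bas h0 h1 !mul1r.
    rewrite comul_bas h1 (_ : (_ == _) = false) ?mul0r //.
    by apply/negbTE; move/ord_neq:  hl; lia.
  rewrite comul_bas h0 (_ : (_ == _) = false) ?mul0r //.
  by apply/negbTE; move/ord_neq:  hl; lia.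
apply: big1 => l _; rewrite comul_bas (_ : (_ == _) = false) ?mul0r //.
by apply/negbTE; move/ord_neq:  hj0; move/ord_neq:  hj1; lia.
Qed.

End Aux.

Section Coalg.
Variables (K : fieldType) (m : nat).
Local Notation n := m.+2.

Definition fN (f : sconst K n) (i j k : nat) : K := f (inord i) (inord j) (inord k).

Lemma sum_eqn (x : nat) (G : 'I_n -> K) :
  \sum_(i < n) ((x == i)%:R * G i) = if (x < n)%N then G (inord x) else 0.
Proof.
case: ifP => hx.
  rewrite (sum_single (i0 := inord x)) => [|i hi]; first by rewrite inordK // eqxx mul1r.
  rewrite (_ : (x == i) = false) ?mul0r //; apply/negbTE; apply: contra hi => /eqP e.
  by apply/eqP/val_inj; rewrite /= inordK // e.
rewrite big1 // => i _; rewrite (_ : (x == i) = false) ?mul0r //.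
by apply/negbTE; apply/eqP => e; move: hx; rewrite e ltn_ord.
Qed.

Lemma sum_addn (a y : nat) (G : 'I_n -> K) : (y < n)%N ->
  \sum_(b < n) (((a + b)%N == y)%:R * G b) = if (a <= y)%N then G (inord (y - a)) else 0.
Proof.
move=> hy; case: leqP => hay.
  have hya : (y - a < n)%N by lia.
  rewrite (sum_single (i0 := inord (y - a))) => [|b hb].
    by rewrite inordK // subnKC // eqxx mul1r.
  rewrite (_ : (_ == _) = false) ?mul0r //; apply/negbTE; apply: contra hb => /eqP e.
  by apply/eqP/val_inj; rewrite /= inordK //; lia.
rewrite big1 // => b _; rewrite (_ : (_ == _) = false) ?mul0r //.
by apply/negbTE; lia.
Qed.

Lemma sum_ord_le (Z : 'I_n -> K) (i : nat) : (i < n)%N ->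
  \sum_(a < n) (if ((a : nat) <= i)%N then Z a else 0) = \sum_(0 <= a < i.+1) Z (inord a).
Proof.
move=> hi.
transitivity (\sum_(a < n) (if ((a : nat) <= i)%N then Z (inord a) else 0)).
  by apply: eq_bigr => a _; rewrite inord_val.
rewrite -(big_mkord xpredT (fun a => if (a <= i)%N then Z (inord a) else 0)).
rewrite (@big_cat_nat _ _ _ i.+1) //= [X in _ + X]big1_seq ?addr0.
  by apply: eq_big_nat => a /andP[_ ha]; rewrite -ltnS ha.
move=> a /andP[_]; rewrite mem_index_iota => /andP[ha _].
by rewrite leqNgt ha.
Qed.

Lemma S_eval (G : 'I_n -> 'I_n -> 'I_n -> 'I_n -> K) i j : (i < n)%N -> (j < n)%N ->
  \sum_(a < n) \sum_(b < n) \sum_(c < n) \sum_(d < n)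
     (((a + b)%N == i)%:R * ((c + d)%N == j)%:R * G a b c d)
  = \sum_(0 <= a < i.+1) \sum_(0 <= c < j.+1) G (inord a) (inord (i - a)) (inord c) (inord (j - c)).
Proof.
move=> hi hj.
transitivity (\sum_(a < n) \sum_(b < n) (((a + b)%N == i)%:R *
   \sum_(c < n) (if ((c:nat) <= j)%N then G a b c (inord (j - c)) else 0))).
  apply: eq_bigr => a _; apply: eq_bigr => b _; rewrite big_distrr; apply: eq_bigr => c _.
  rewrite -(sum_addn c (fun d => G a b c d)) // big_distrr; apply: eq_bigr => d _ /=.
  by rewrite mulrA.
transitivity (\sum_(a < n) (if ((a:nat) <= i)%N then
   \sum_(c < n) (if ((c:nat) <= j)%N then G a (inord (i - a)) c (inord (j - c)) else 0) else 0)).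
  apply: eq_bigr => a _.
  exact: (sum_addn a (fun b => \sum_(c<n) (if ((c:nat) <= j)%N then G a b c (inord (j-c)) else 0))).
rewrite sum_ord_le //; apply: eq_big_nat => a /andP[_ ha]; rewrite sum_ord_le //.
apply: eq_big_nat => c /andP[_ hc]; rewrite !inordK //; lia.
Qed.

Lemma lin_delta (f : sconst K n) i0 j0 q :
  lin f (fun x y => (x == i0)%:R * (y == j0)%:R) q = f i0 j0 q.
Proof. exact: (sum2_delta (fun x y => f x y q)). Qed.

Lemma ff_delta (f : sconst K n) i0 j0 k l :
  ff_comul2 f (fun x y => (x == i0)%:R * (y == j0)%:R) k l =
  \sum_(a < n) \sum_(b < n) \sum_(c < n) \sum_(d < n)
     (((a + b)%N == i0)%:R * ((c + d)%N == j0)%:R * (f a c k * f b d l)).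
Proof.
rewrite /ff_comul2 /=.
exact: (sum2_delta (fun x y : 'I_n => \sum_(a < n) \sum_(b < n) \sum_(c < n) \sum_(d < n)
     (((a + b)%N == x)%:R * ((c + d)%N == y)%:R * (f a c k * f b d l)))).
Qed.

Lemma cm_eps (f : sconst K n) : coalg_morph f -> forall i j, (i < n)%N -> (j < n)%N ->
  fN f i j 0 = ((i == 0%N) && (j == 0%N))%:R.
Proof.
move=> [_ he] i j hi hj.
have := he (fun x y => (x == inord i)%:R * (y == inord j)%:R).
rewrite /eps; under eq_bigr => q _ do rewrite lin_delta.
rewrite (sum_single (i0 := ord0)) => [|q hq]; last first.
  by rewrite (_ : (_ == _) = false) ?mul0r //; apply/negbTE; apply: contra hq => /eqP e; apply/eqP/val_inj.
rewrite /= mul1r /eps2.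
rewrite (_ : \sum_(i0 < n) _ = \sum_(x : 'I_n) \sum_(y : 'I_n) ((x == inord i)%:R * (y == inord j)%:R *
   (((x : nat) == 0%N)%:R * ((y : nat) == 0%N)%:R))); last first.
  by apply: eq_bigr => x _; apply: eq_bigr => y _; rewrite mulrC.
rewrite (sum2_delta (fun x y : 'I_n => (((x : nat) == 0%N)%:R * ((y : nat) == 0%N)%:R))) !inordK //.
rewrite /fN (_ : inord 0 = ord0); last by apply: val_inj; rewrite /= inordK.
by move=> ->; rewrite -natrM mulnb.
Qed.

Lemma cm_mul (f : sconst K n) : coalg_morph f -> forall i j k l,
  (i < n)%N -> (j < n)%N -> (k < n)%N -> (l < n)%N ->
  (if (k + l < n)%N then fN f i j (k + l) else 0) =
  \sum_(0 <= a < i.+1) \sum_(0 <= c < j.+1) fN f a c k * fN f (i - a) (j - c) l.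
Proof.
move=> [hc _] i j k l hi hj hk hl.
have := hc (fun x y => (x == inord i)%:R * (y == inord j)%:R) (inord k) (inord l).
rewrite /comul; under eq_bigr => q _ do rewrite lin_delta.
rewrite ff_delta (S_eval (fun a b c d => f a c (inord k) * f b d (inord l))) // !inordK //.
by rewrite sum_eqn.
Qed.

End Coalg.

Section Deriv.
Variables (K : fieldType) (m : nat).
Local Notation n := m.+2.
Variable f : sconst K n.
Hypothesis cm : coalg_morph f.
Local Notation fN := (@fN K m f).

Lemma R0 j k l : (j < n)%N -> (k < n)%N -> (l < n)%N ->
  (if (k + l < n)%N then fN 0 j (k + l) else 0) =
  \sum_(0 <= c < j.+1) fN 0 c k * fN 0 (j - c) l.
Proof. by move=> hj hk hl; rewrite (cm_mul cm) // big_nat1 subnn. Qed.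

Lemma R1 j k l : (j < n)%N -> (k < n)%N -> (l < n)%N ->
  (if (k + l < n)%N then fN 1 j (k + l) else 0) =
  \sum_(0 <= c < j.+1) fN 0 c k * fN 1 (j - c) l +
  \sum_(0 <= c < j.+1) fN 1 c k * fN 0 (j - c) l.
Proof. by move=> hj hk hl; rewrite (cm_mul cm) // big_nat_recr //= big_nat1 subn0 subnn. Qed.

Lemma Z0 k : (0 < k)%N -> (k < n)%N -> fN 0 0 k = 0.
Proof.
have pw : forall q, (q < n)%N -> fN 0 0 q = fN 0 0 1 ^+ q.
  elim=> [|q IH] hq; first by rewrite (cm_eps cm) // expr0.
  have := R0 (j := 0) (k := q) (l := 1) isT (ltnW hq) isT.
  rewrite addn1 hq big_nat1 subnn => ->; rewrite IH ?exprSr //; exact: ltnW.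
have c0 : fN 0 0 1 = 0.
  have := R0 (j := 0) (k := 1) (l := m.+1) isT isT (ltnSn _).
  rewrite add1n ltnn big_nat1 subnn (pw m.+1) // -exprS => /esym/eqP.
  by rewrite expf_eq0 /= => /eqP.
by move=> hk0 hk; rewrite pw // c0 expr0n; case: k hk0 hk.
Qed.

Lemma ZD mm j : (mm < n)%N -> (j < mm)%N -> fN 0 j mm = 0.
Proof.
elim: mm j => [|mm IH] j hmm hj; first by [].
have := R0 (j := j) (k := 1) (l := mm) ltac:(lia) isT ltac:(lia).
rewrite add1n hmm => ->; apply: sumn_zero => c hc.
case: c hc => [|c] hc; first by rewrite Z0 ?mul0r.
by rewrite IH ?mulr0 //; lia.
Qed.

Lemma ZT mm : (mm < n)%N -> fN 0 mm mm = fN 0 1 1 ^+ mm.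
Proof.
elim: mm => [|mm IH] hmm; first by rewrite (cm_eps cm).
have := R0 (j := mm.+1) (k := 1) (l := mm) hmm isT ltac:(lia).
rewrite add1n hmm => ->; rewrite (sumn_single (c0 := 1)) // => [|c hc hc1].
  by rewrite subn1 /= IH ?exprS //; lia.
case: c hc hc1 => [|c] hc hc1; first by rewrite Z0 ?mul0r.
by rewrite [fN 0 (_ - _) _]ZD ?mulr0 //; lia.
Qed.

Lemma OD mm j : (mm < n)%N -> (j < n)%N -> (j.+1 < mm)%N -> fN 1 j mm = 0.
Proof.
elim: mm j => [|mm IH] j hmm hj hjm; first by [].
have := R1 (j := j) (k := 1) (l := mm) hj isT ltac:(lia).
rewrite add1n hmm => ->.
rewrite sumn_zero => [|c hc]; last first.
  case: c hc => [|c] hc; first by rewrite Z0 ?mul0r.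
  by rewrite IH ?mulr0 //; lia.
by rewrite sumn_zero ?addr0 // => c hc; rewrite ZD ?mulr0 //; lia.
Qed.

Lemma OTstep mm : (mm.+1 < n)%N ->
  fN 1 mm mm.+1 = mm.+1%:R * fN 1 0 1 * fN 0 1 1 ^+ mm ->
  (if (mm.+2 < n)%N then fN 1 mm.+1 mm.+2 else 0) =
   mm.+2%:R * fN 1 0 1 * fN 0 1 1 ^+ mm.+1.
Proof.
move=> hmm IH.
have := R1 (j := mm.+1) (k := 1) (l := mm.+1) hmm isT hmm.
rewrite add1n => ->.
rewrite (sumn_single (c0 := 1)) // => [|c hc hc1]; last first.
  case: c hc hc1 => [|[|c]] hc hc1 //; first by rewrite Z0 ?mul0r.
  by rewrite OD ?mulr0 //; lia.
rewrite (sumn_single (c0 := 0)) // => [|c hc hc1]; last first.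
  by rewrite ZD ?mulr0 //; lia.
rewrite subn1 subn0 /= IH (ZT hmm).
rewrite exprS !mulrS; ring.
Qed.

Lemma OT mm : (mm.+1 < n)%N -> fN 1 mm mm.+1 = mm.+1%:R * fN 1 0 1 * fN 0 1 1 ^+ mm.
Proof.
elim: mm => [|mm IH] hmm; first by rewrite expr0 mulr1 mul1r.
have := OTstep (mm := mm) ltac:(lia) (IH ltac:(lia)).
by rewrite hmm.
Qed.

Lemma A2 : [pchar K] =i pred0 -> fN 1 0 1 != 0 -> fN 0 1 1 = 0.
Proof.
move=> hK ha1.
have := OTstep (mm := m) (ltnSn _) (OT (ltnSn _)).
rewrite ltnn => /esym/eqP; rewrite !mulf_eq0 (negbTE ha1) orbF expf_eq0 /=.
have /GRing.pcharf0P -> : has_char0 K by [].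
by move=> /eqP.
Qed.

Lemma S10 k : (k < n)%N -> k != 1%N -> fN 1 0 k = 0.
Proof.
case: k => [|[|k]] hk hk1 //; first by rewrite (cm_eps cm).
by rewrite OD.
Qed.

Lemma S00 k : (k < n)%N -> fN 0 0 k = (k == 0%N)%:R.
Proof. by case: k => [|k] hk; [rewrite (cm_eps cm) | rewrite Z0]. Qed.

Hypothesis a20 : fN 0 1 1 = 0.

Lemma S01 k : (k < n)%N -> fN 0 1 k = 0.
Proof.
case: k => [|[|k]] hk //; first by rewrite (cm_eps cm).
by rewrite ZD.
Qed.

Lemma S11 k : (k < n)%N -> k != 1%N -> fN 1 1 k = 0.
Proof.
case: k => [|[|[|k]]] hk hk1 //; first by rewrite (cm_eps cm).
  by rewrite (OT (mm := 1)) // a20 expr1 mulr0.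
by rewrite OD.
Qed.

End Deriv.

Section Ord.
Variables (K : fieldType) (m : nat).
Local Notation n := m.+2.
Variable f : sconst K n.
Hypothesis cm : coalg_morph f.

Lemma ne_inord (i : 'I_n) j : (j < n)%N -> i != inord j -> (i : nat) != j.
Proof. by move=> hj /ord_neq; rewrite inordK. Qed.

Lemma sp10 : forall i : 'I_n, i != inord 1 -> f (inord 1) (inord 0) i = 0.
Proof.
move=> i hi; rewrite -[i]inord_val; apply: (S10 cm) => //; exact: ne_inord hi.
Qed.

Lemma sp00 : forall i : 'I_n, i != inord 0 -> f (inord 0) (inord 0) i = 0.
Proof.
move=> i hi; rewrite -[i]inord_val.
have := S00 cm (ltn_ord i); rewrite /fN => ->.
by rewrite (negbTE (ne_inord _ hi)).
Qed.

Lemma v00 : f (inord 0) (inord 0) (inord 0) = 1.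
Proof. exact: (S00 cm (k := 0) isT). Qed.

Hypothesis a20 : fN f 0 1 1 = 0.

Lemma sp01 : forall i : 'I_n, i != inord 1 -> f (inord 0) (inord 1) i = 0.
Proof. move=> i hi; rewrite -[i]inord_val; exact: (S01 cm a20). Qed.

Lemma v01 : f (inord 0) (inord 1) (inord 1) = 0.
Proof. exact: a20. Qed.

Lemma sp11 : forall i : 'I_n, i != inord 1 -> f (inord 1) (inord 1) i = 0.
Proof.
move=> i hi; rewrite -[i]inord_val; apply: (S11 cm a20) => //; exact: ne_inord hi.
Qed.

End Ord.

Lemma eps_bas0 (K : fieldType) n (o0 : 'I_n) : nat_of_ord o0 = 0%N -> eps (bas K o0) = 1.
Proof.
move=> h0; rewrite /eps /bas (sum_single (i0 := o0)) ?eqxx ?h0 ?mulr1 // => i hi.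
by rewrite (negbTE hi) mulr0.
Qed.

Theorem proposition2p3 (K : closedFieldType) (hK : [pchar K] =i pred0)
  (n : nat) (hn : (1 < n)%N) (p d : sconst K n) :
  regular_qcycle_coalg p d ->
  p (Ordinal hn) (Ordinal hn) (Ordinal hn) = d (Ordinal hn) (Ordinal hn) (Ordinal hn).
Proof.
case: n hn p d => [|[|m]] // hn p d [[cmp [cmd [up [dn [cmu [cmn reg]]]]]] cyc].
have h0 : nat_of_ord (inord 0 : 'I_m.+2) = 0%N by rewrite inordK.
have h1 : nat_of_ord (inord 1 : 'I_m.+2) = 1%N by rewrite inordK.
have -> : Ordinal hn = inord 1 by apply: val_inj; rewrite /= inordK.
have [r1 [_ [r3 _]]] := reg (bas K (inord 1)) (bas K (inord 0)).
have a1p : p (inord 1) (inord 0) (inord 1) != 0.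
  have := r1 (inord 1); rewrite (sw0 h0 h1) /= (bil1 _ _ _ (sp10 cmu)).
  rewrite /vscale (eps_bas0 K h0) /bas eqxx mul1r => e.
  by apply/eqP => e0; move: e; rewrite e0 mulr0 => /eqP; rewrite eq_sym oner_eq0.
have b1p : d (inord 1) (inord 0) (inord 1) != 0.
  have := r3 (inord 1); rewrite (sw0 h0 h1) /= (bil1 _ _ _ (sp10 cmd)).
  rewrite /vscale (eps_bas0 K h0) /bas eqxx mul1r => e.
  by apply/eqP => e0; move: e; rewrite e0 mul0r => /eqP; rewrite eq_sym oner_eq0.
have ap2 := A2 cmp hK a1p.
have ad2 := A2 cmd hK b1p.
have s10p := sp10 cmp. have s10d := sp10 cmd.
have s00p := sp00 cmp. have s00d := sp00 cmd.
have s01p := sp01 cmp ap2. have s01d := sp01 cmd ad2.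
have s11p := sp11 cmp ap2. have s11d := sp11 cmd ad2.
have [p00 d00] := (v00 cmp, v00 cmd).
have [p01 d01] := (v01 ap2, v01 ad2).
have [eI [_ eII]] := cyc (bas K (inord 1)) (bas K (inord 1)) (bas K (inord 1)).
have [eE1 [_ eF1]] := cyc (bas K (inord 1)) (bas K (inord 1)) (bas K (inord 0)).
have [eE2 [_ eF2]] := cyc (bas K (inord 1)) (bas K (inord 0)) (bas K (inord 1)).
move: (eI (inord 1)) (eII (inord 1)) (eE1 (inord 1)) (eF1 (inord 1)) (eE2 (inord 1)) (eF2 (inord 1)).
rewrite ?(sw1 h0 h1) ?(sw0 h0 h1) /=.
rewrite ?(bil2 _ _ s10p s10p) ?(bil2 _ _ s10p s10d) ?(bil2 _ _ s10p s00p) ?(bil2 _ _ s10p s00d) ?(bil2 _ _ s10p s01p) ?(bil2 _ _ s10p s01d) ?(bil2 _ _ s10p s11p) ?(bil2 _ _ s10p s11d) ?(bil2 _ _ s10d s10p) ?(bil2 _ _ s10d s10d) ?(bil2 _ _ s10d s00p) ?(bil2 _ _ s10d s00d) ?(bil2 _ _ s10d s01p) ?(bil2 _ _ s10d s01d) ?(bil2 _ _ s10d s11p) ?(bil2 _ _ s10d s11d) ?(bil2 _ _ s00p s10p) ?(bil2 _ _ s00p s10d) ?(bil2 _ _ s00p s00p) ?(bil2 _ _ s00p s00d) ?(bil2 _ _ s00p s01p) ?(bil2 _ _ s00p s01d) ?(bil2 _ _ s00p s11p) ?(bil2 _ _ s00p s11d) ?(bil2 _ _ s00d s10p) ?(bil2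 _ _ s00d s10d) ?(bil2 _ _ s00d s00p) ?(bil2 _ _ s00d s00d) ?(bil2 _ _ s00d s01p) ?(bil2 _ _ s00d s01d) ?(bil2 _ _ s00d s11p) ?(bil2 _ _ s00d s11d) ?(bil2 _ _ s01p s10p) ?(bil2 _ _ s01p s10d) ?(bil2 _ _ s01p s00p) ?(bil2 _ _ s01p s00d) ?(bil2 _ _ s01p s01p) ?(bil2 _ _ s01p s01d) ?(bil2 _ _ s01p s11p) ?(bil2 _ _ s01p s11d) ?(bil2 _ _ s01d s10p) ?(bil2 _ _ s01d s10d) ?(bil2 _ _ s01d s00p) ?(bil2 _ _ s01d s00d) ?(bil2 _ _ s01d s01p) ?(bil2 _ _ s01d s01d) ?(bil2 _ _ s01d s11p) ?(bil2 _ _ s01d s11d) ?(bil2 _ _ s11p s10p) ?(bil2 _ _ s11p s10d) ?(bil2 _ _ s11p s00p) ?(bil2 _ _ s11p s00d) ?(bil2 _ _ s11p s01p) ?(bil2 _ _ s11p s01d) ?(bil2 _ _ s11p s11p) ?(bil2 _ _ s11p s11d) ?(bil2 _ _ s11d s10p) ?(bil2 _ _ s11d s10d) ?(bil2 _ _ s11d s00p) ?(bil2 _ _ s11d s00d) ?(bil2 _ _ s11d s01p) ?(bil2 _ _ s11d s01d) ?(bil2 _ _ s11d s11p) ?(bil2 _ _ s11d s11d).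
rewrite p00 d00 p01 d01.
set a1 := p (inord 1) (inord 0) (inord 1) in a1p *.
set b1 := d (inord 1) (inord 0) (inord 1) in b1p *.
set a := p (inord 1) (inord 1) (inord 1).
set b := d (inord 1) (inord 1) (inord 1).
move=> eI' eII' eE1' eF1' eE2' eF2'.
have ha1 : a1 * a = a by apply: (mulfI a1p); rewrite mulrA -eE1'; ring.
have hb1a : b1 * a = a by apply: (mulfI a1p); rewrite mulrA eE2'; ring.
have hab : a1 * b = b by apply: (mulfI b1p); rewrite mulrA -eF1'; ring.
have hbb : b1 * b = b by apply: (mulfI b1p); rewrite mulrA eF2'; ring.
have key : (a - b) ^+ 2 =
  ((b1 * b * b + b * b1 * b) - (b * a1 * b + b1 * a * b)) - 2%:R * b * (b1 * b - b)
  + b * (a1 * b - b) + b * (b1 * a - a)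
  - ((a1 * b * a + a * b1 * a) - (a * a1 * a + a1 * a * a))
  + b * (a1 * a - a) + a * (b1 * a - a) - 2%:R * a * (a1 * a - a) by ring.
move: key; rewrite eI' eII' !subrr ha1 hb1a hab hbb !subrr !mulr0 !subr0 !addr0.
by move/eqP; rewrite expf_eq0 /= subr_eq0 => /eqP.
Qed.
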